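(* Let $G$ be a $k$-right-regular bipartite Tanner graph with girth $g$ and smallest left degree $d$, in which every right (constraint) node represents a constraint given by a binary linear $[k,k',\epsilon k]$ subcode on its $k$ neighbouring variable nodes, and let $x=\epsilon k-1$. Then the minimum pseudocodeword weights on the BSC and on the AWGN channel each satisfy \[ w_{\min} \ge \begin{cases} 1+dx+d(d-1)x^2+\cdots+d(d-1)^{\frac{g-6}{4}}x^{\frac{g-2}{4}}, & \frac{g}{2}\text{ odd},\\ 1+dx+\cdots+d(d-1)^{\frac{g-8}{4}}x^{\frac{g-4}{4}}+(d-1)^{\frac{g-4}{4}}x^{\frac{g}{4}}, & \frac{g}{2}\text{ even}.\end{cases}\]
   Context: A generalized Tanner graph is a finite bipartite graph with variable nodes $v_1,\dots,v_n$ and constraint nodes, each constraint node $u$ of degree $k$ being associated with a binary linear code of length $k$ (here an $[k,k',\epsilon k]$ code, i.e. of dimension $k'$ and minimum distance $\epsilon k$) on its neighbours; a codeword is an $x\in\{0,1\}^n$ whose restriction to the neighbourhood of every constraint node is a codeword of that node's subcode. A degree-$\ell$ lift $\hat G$ replaces each node by a cloud of $\ell$ copies and each edge $(x,y)$ by a perfect matching between the clouds, each copy of a constraint node carrying the same subcode constraint. A pseudocodeword of $G$ is a nonnegative integer vector $p=(p_1,\dots,p_n)$ obtained from a codeword of some finite lift by letting $p_i$ be the number of copies of $v_i$ with value 1. For nonzero $p$, let $e$ be the smallest number such that the sum of the $e$ largest $p_i$ is at least $\frac12\sum_ip_i$; $w^{BSC}(p)=2e$ if equality holds and $2e-1$ otherwise;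 $w^{AWGN}(p)=(\sum_ip_i)^2/\sum_ip_i^2$. The minimum pseudocodeword weight on a channel is the minimum of that weight over all nonzero pseudocodewords. *)

(* Defs.v *)
From HB Require Import structures.
From mathcomp Require Import all_boot all_order fingroup perm.
From mathcomp Require Import all_algebra.
Set Implicit Arguments. Unset Strict Implicit. Unset Printing Implicit Defensive.
Import Order.TTheory GRing.Theory Num.Theory.

(** A generalized Tanner graph with [n] variable nodes ('I_n), [m] constraint
    nodes ('I_m) in which every constraint node has [k] neighbours.
    [nb u] enumerates the k neighbours of constraint node [u] (a bijection
    'I_k -> neighbourhood of u), fixing the coordinate order in which the
    local subcode [code u] (a binary linear code of length k) is read. *)
Record tanner (n m k : nat) := Tanner {
  adj : 'I_n -> 'I_m -> bool;
  nb : 'I_m -> 'I_k -> 'I_n;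
  code : 'I_m -> {vspace 'rV['F_2]_k};
  nb_inj : forall u, injective (nb u);
  nb_adj : forall u j, adj (nb u j) u;
  nb_onto : forall u i, adj i u -> exists j, nb u j = i
}.

Section Defs.
Variables (n m k : nat) (G : tanner n m k).

Definition to_F2 (w : 'I_k -> bool) : 'rV['F_2]_k := \row_j ((w j)%:R)%R.

Definition hweight (c : 'rV['F_2]_k) : nat := #|[set j | c ord0 j != 0%R]|.

Definition is_code_params (C : {vspace 'rV['F_2]_k}) (k' D : nat) : Prop :=
  \dim C = k' /\
  (forall c, c \in C -> c != 0%R -> D <= hweight c) /\
  (exists2 c, c \in C & (c != 0%R) && (hweight c == D)).

Definition left_deg (i : 'I_n) : nat := #|[set u | adj G i u]|.
Definition right_deg (u : 'I_m) : nat := #|[set i | adj G i u]|.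

Definition right_regular (kk : nat) : Prop := forall u, right_deg u = kk.

Definition min_left_degree (d : nat) : Prop :=
  (forall i, d <= left_deg i) /\ exists i, left_deg i = d.

Definition tg_rel : rel ('I_n + 'I_m) := fun x y =>
  match x, y with
  | inl i, inr u => adj G i u
  | inr u, inl i => adj G i u
  | _, _ => false
  end.

Definition has_cycle_of_length (L : nat) : Prop :=
  exists s : seq ('I_n + 'I_m), [/\ size s = L, 3 <= L, uniq s & path.cycle tg_rel s].

Definition girth (g : nat) : Prop :=
  has_cycle_of_length g /\ forall L, has_cycle_of_length L -> g <= L.

(** a codeword of a degree-ell lift: [perm i u] is the perfect matching between
    the clouds of v_i and u (copy a of v_i is joined to copy perm i u a of u);
    [w i a] is the value of copy a of v_i. Copy b of u is joined, for each
    coordinate j, to copy (perm (nb u j) u)^-1 b of v_(nb u j). *)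
Definition lift_codeword (ell : nat) (perm : 'I_n -> 'I_m -> {perm 'I_ell})
    (w : 'I_n -> 'I_ell -> bool) : Prop :=
  forall (u : 'I_m) (b : 'I_ell),
    to_F2 (fun j => w (nb G u j) ((perm (nb G u j) u)^-1%g b)) \in code G u.

Definition pseudocodeword (p : 'I_n -> nat) : Prop :=
  exists ell (perm : 'I_n -> 'I_m -> {perm 'I_ell}) (w : 'I_n -> 'I_ell -> bool),
    lift_codeword perm w /\ forall i, p i = #|[set a | w i a]|.

End Defs.

Section Weights.
Variable n : nat.
Implicit Type p : 'I_n -> nat.

Definition total p : nat := \sum_(i < n) p i.

Definition top_sum p (e : nat) : nat :=
  \max_(S : {set 'I_n} | #|S| == e) \sum_(i in S) p i.

(** smallest e such that the sum of the e largest p_i is >= (1/2) sum_i p_i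
    (e = n always works, so the search over 0..n finds the minimum) *)
Definition bsc_e p : nat :=
  find (fun e => total p <= 2 * top_sum p e) (iota 0 n.+1).

Definition w_BSC p : nat :=
  let e := bsc_e p in
  if 2 * top_sum p e == total p then 2 * e else 2 * e - 1.

Definition w_AWGN p : rat :=
  ((total p)%:R ^+ 2 / (\sum_(i < n) (p i)%:R ^+ 2))%R.

End Weights.

Definition bterm (d x i : nat) : nat :=
  if i == 0 then 1 else d * (d - 1) ^ (i - 1) * x ^ i.

Definition pcw_bound (d x g : nat) : nat :=
  if odd (g %/ 2) then \sum_(i < (g - 2) %/ 4 + 1) bterm d x i
  else \sum_(i < (g - 4) %/ 4 + 1) bterm d x i + (d - 1) ^ ((g - 4) %/ 4) * x ^ (g %/ 4).

(* Main.v *)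
Require Import Defs.
From HB Require Import structures.
From mathcomp Require Import all_boot all_order fingroup perm.
From mathcomp Require Import all_algebra.
From mathcomp Require Import zify.
Import Order.TTheory GRing.Theory Num.Theory.
Set Implicit Arguments. Unset Strict Implicit. Unset Printing Implicit Defensive.

Fixpoint Sr (d x h : nat) : nat := if h is h'.+1 then 1 + (d - 1) * x * Sr d x h' else 0.

Section Graph.
Variables (n m k : nat) (G : tanner n m k).
Local Notation V := ('I_n + 'I_m)%type.
Local Notation e := (tg_rel G).

Lemma tg_sym : symmetric e.
Proof. by case=> [i|u] [j|v]. Qed.

Lemma tg_irr x : e x x = false.
Proof. by case: x. Qed.

Fixpoint nbt (l : seq V) : bool :=
  if l is a :: l' then
    (if l' is b :: c :: _ then a != c else true) && nbt l'
  else true.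

Lemma cycle_of_walk s x : path e x s -> nbt (x :: s) -> ~~ uniq (x :: s) ->
  exists L, L <= size s /\ has_cycle_of_length G L.
Proof.
elim: s x => [|y s IH] x; first by move=> _ _; rewrite /=.
move=> /= /andP[exy ps] /andP[Hxs nb].
rewrite negb_and negbK => /orP[xin|nu]; last first.
  by have [L [HL HC]] := IH y ps nb nu; exists L; split => //; apply: leqW.
case: (boolP (uniq (y :: s))) => nu; last first.
  by have [L [HL HC]] := IH y ps nb nu; exists L; split => //; apply: leqW.
have xy : x != y by apply/eqP=> exy'; rewrite exy' tg_irr in exy.
move: xin; rewrite inE (negbTE xy) /= => xin.
case/splitPr: xin nu ps Hxs nb => s1 s2 nu ps Hxs nb.
exists (size (x :: y :: s1)); split; first by rewrite /= size_cat /= addnS ltnS leq_addr.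
exists (x :: y :: s1); split => //.
- case: s1 nu ps Hxs nb => [|z s1] //= nu ps Hxs; by rewrite eqxx in Hxs.
- move: nu; rewrite -cat_cons cat_uniq => /and3P[u1 /hasPn H _].
  by rewrite cons_uniq u1 andbT; apply: H; rewrite inE eqxx.
- rewrite /= rcons_path exy /=; move: ps; rewrite cat_path => /andP[-> /=].
  by case/andP.
Qed.

Definition pathl (l : seq V) := if l is x :: s then path e x s else true.

Lemma pathl_catrev Q P : pathl Q -> pathl P ->
  (if Q is q :: _ then (if P is p :: _ then e q p else true) else true) ->
  pathl (catrev Q P).
Proof.
elim: Q P => [|q Q IH] P //= pQ pP J.
apply: IH.
- by case: Q pQ => //= q' Q /andP[].
- by case: P pP J => //= p P' -> ->.
- by case: Q pQ => //= q' Q /andP[]; rewrite tg_sym.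
Qed.

Lemma nbt_tail a l : nbt (a :: l) -> nbt l.
Proof. by case/andP. Qed.

Lemma nbt_catrev Q P : nbt Q -> nbt P ->
  (if Q is _ :: q2 :: _ then (if P is p1 :: _ then q2 != p1 else true) else true) ->
  (if Q is q1 :: _ then (if P is _ :: p2 :: _ then q1 != p2 else true) else true) ->
  nbt (catrev Q P).
Proof.
elim: Q P => [|q Q IH] P //= /andP[J0 nQ] nP J1 J2.
apply: IH => //.
- by rewrite /= nP andbT; case: P nP J1 J2 => // p1 [|p2 P'].
- by case: Q J0 nQ J1 {J2} => // q2 [|q3 Q'] //= J0 _ _; rewrite eq_sym.
Qed.

Variable g : nat.
Hypothesis Hg : forall L, has_cycle_of_length G L -> g <= L.

Lemma closed_walk l : pathl l -> nbt l -> ~~ uniq l -> g <= (size l).-1.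
Proof.
case: l => [|x s] //= ps nb nu.
by have [L [HL HC]] := cycle_of_walk ps nb nu; apply: leq_trans (Hg HC) HL.
Qed.

Fixpoint desc (h : nat) (j : 'I_n) (u : 'I_m) : {set 'I_n} :=
  if h is h'.+1 then
    j |: \bigcup_(c : 'I_m * 'I_n)
      (if (adj G j c.1 && (c.1 != u)) && adj G c.2 c.1 && (c.2 != j)
       then desc h' c.2 c.1 else set0)
  else set0.

Lemma desc_walk h j u i : i \in desc h j u -> adj G j u ->
  exists s, [/\ path e (inr u) (inl j :: s), nbt (inr u :: inl j :: s),
     size s + 2 <= 2 * h & last (inl j) s = inl i].
Proof.
elim: h j u => [|h IH] j u //=; first by rewrite inE.
move=> Hi aju; move: Hi; rewrite in_setU1 => /orP[/eqP->|].
  by exists [::]; rewrite /= aju; split => //; rewrite mulnS.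
case/bigcupP=> -[u' j'] _ /=.
case: ifP => [/andP[/andP[/andP[aju' nu'] aj'u'] nj'] | _]; last by rewrite inE.
move=> /IH /(_ aj'u') [s [ps nb sz ls]].
exists (inr u' :: inl j' :: s); split => //=.
- by rewrite aju aju'.
- apply/andP; split; first by rewrite eq_sym.
  by apply/andP; split; [rewrite eq_sym|exact: nb].
- by move: sz; rewrite /=; lia.
Qed.


Lemma not_back h j u' j' : j \in desc h j' u' -> adj G j u' -> adj G j' u' ->
  j' != j -> g <= 2 * h.
Proof.
move=> Hj aju' aj'u' nj; have [s [ps nb sz ls]] := desc_walk Hj aj'u'.
have jin : inl j \in [:: inl j' & s] by rewrite -ls mem_last.
have nu : ~~ uniq [:: inl j, inr u', inl j' & s] by rewrite /= inE jin orbT.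
have pl : pathl [:: inl j, inr u', inl j' & s] by rewrite /= aju'.
have nl : nbt [:: inl j, inr u', inl j' & s] by rewrite /= eq_sym nj.
have := closed_walk pl nl nu; rewrite /=; lia.
Qed.

Lemma notuniq_catrev Q P (z : V) : z \in Q -> z \in P -> ~~ uniq (catrev Q P).
Proof.
move=> zQ zP; rewrite catrevE cat_uniq negb_and negb_and negbK.
by apply/orP; right; apply/orP; left; apply/hasP; exists z => //; rewrite mem_rev.
Qed.

Lemma cross h1 h2 j u1 j1 u2 j2 i : i \in desc h1 j1 u1 -> i \in desc h2 j2 u2 ->
  adj G j u1 -> adj G j u2 -> adj G j1 u1 -> adj G j2 u2 -> j1 != j -> j2 != j ->
  (u1, j1) != (u2, j2) -> g <= 2 * h1 + 2 * h2 - (u1 == u2).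
Proof.
move=> H1 H2 aju1 aju2 a1 a2 n1 n2 neq.
have [s1 [ps1 nb1 sz1 ls1]] := desc_walk H1 a1.
have [s2 [ps2 nb2 sz2 ls2]] := desc_walk H2 a2.
have iQ : inl i \in inl j1 :: s1 by rewrite -ls1 mem_last.
have iP : inl i \in inl j2 :: s2 by rewrite -ls2 mem_last.
have pQ : pathl (inl j1 :: s1) by case/andP: ps1.
have nQ : nbt (inl j1 :: s1) by case/andP: nb1.
have jn1 : if inl j1 :: s1 is _ :: q2 :: _ then q2 != inr u1 else true.
  by case: s1 {ls1 H1 iQ pQ nQ ps1 sz1} nb1 => //= c s1 /and3P[]; rewrite eq_sym.
case: eqP => [eu|/eqP nu].
  subst u2; have nj : j1 != j2 by apply: contraNneq neq => ->.
  pose l := catrev (inl j1 :: s1) [:: inr u1, inl j2 & s2].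
  have ul : ~~ uniq l by apply: (notuniq_catrev iQ); rewrite inE iP orbT.
  have pl : pathl l by apply: pathl_catrev => //=; rewrite a2.
  have nl : nbt l.
    apply: nbt_catrev => //=; first by move: jn1; case: (s1).
  have := closed_walk pl nl ul.
  rewrite /l catrevE size_cat size_rev /= => Hgl; clear -Hgl sz1 sz2; lia.
pose l := catrev (inl j1 :: s1) [:: inr u1, inl j, inr u2, inl j2 & s2].
have ul : ~~ uniq l by apply: (notuniq_catrev iQ); do 3 apply: mem_behead; exact: iP.
have pl : pathl l by apply: pathl_catrev => //=; rewrite aju1 aju2 a2; case/andP: ps2.
have nl : nbt l.
  apply: nbt_catrev => //=.
  - by rewrite nu eq_sym n2 /=; exact: nb2.
  - by move: jn1; case: (s1).
have := closed_walk pl nl ul.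
rewrite /l catrevE size_cat size_rev /= subn0 => Hgl; clear -Hgl sz1 sz2; lia.
Qed.


Variables (p : 'I_n -> nat) (x d : nat).
Hypothesis Hloc : forall i u, adj G i u -> x * p i <= \sum_(j | adj G j u && (j != i)) p j.
Hypothesis Hdeg : forall i, d <= left_deg G i.

Local Notation Sr := (Sr d x).

Lemma kids_sum j (P : pred 'I_m) (hf : 'I_m -> nat) :
  (forall u', P u' -> adj G j u') ->
  (forall u', P u' -> 2 * hf u' < g) ->
  (forall u1 u2, P u1 -> P u2 -> 2 * hf u1 + 2 * hf u2 < g + (u1 == u2)) ->
  (forall u' j', P u' -> adj G j' u' ->
     p j' * Sr (hf u') <= \sum_(i in desc (hf u') j' u') p i) ->
  j \notin \bigcup_(c : 'I_m * 'I_n)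
      (if P c.1 && adj G c.2 c.1 && (c.2 != j) then desc (hf c.1) c.2 c.1 else set0) /\
  \sum_(u' | P u') x * p j * Sr (hf u') <= \sum_(i in \bigcup_(c : 'I_m * 'I_n)
      (if P c.1 && adj G c.2 c.1 && (c.2 != j) then desc (hf c.1) c.2 c.1 else set0)) p i.
Proof.
move=> PA P2 Pc Pk; split.
  apply/bigcupP=> -[[u' j'] _ /=]; case: ifP; last by rewrite inE.
  case/andP=> /andP[Pu aj' nj] Hj.
  by have := not_back Hj (PA _ Pu) aj' nj; have := P2 _ Pu; lia.
rewrite partition_disjoint_bigcup; last first.
  move=> [u1 j1] [u2 j2] neq /=.
  apply/pred0P=> i /=; apply/negP => /andP[].
  case: ifP => [/andP[/andP[P1 a1 n1]] |]; last by rewrite inE.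
  case: ifP => [/andP[/andP[P2' a2 n2]] |]; last by rewrite inE.
  move=> H1 H2.
  have := cross H1 H2 (PA _ P1) (PA _ P2') a1 a2 n1 n2 neq.
  have := Pc _ _ P1 P2'.
  case: (hf u1) H1 => [|h1] H1; first by rewrite inE in H1.
  lia.
apply: (@leq_trans (\sum_(c | P c.1 && adj G c.2 c.1 && (c.2 != j)) p c.2 * Sr (hf c.1))).
  have -> : \sum_(c | P c.1 && adj G c.2 c.1 && (c.2 != j)) p c.2 * Sr (hf c.1) =
     \sum_(u' | P u') \sum_(j' | adj G j' u' && (j' != j)) p j' * Sr (hf u').
    by rewrite pair_big_dep; apply: eq_bigl => -[a b]; rewrite andbA.
  apply: leq_sum => u' Pu; rewrite -big_distrl /=.
  by apply: leq_mul (leqnn _); apply: Hloc; apply: PA.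
rewrite big_mkcond; apply: leq_sum => c _.
case: (boolP (P c.1 && adj G c.2 c.1 && (c.2 != j))) => [/andP[/andP[Pu a _]]|_].
  exact: Pk.
by rewrite big_set0.
Qed.

Lemma desc_sum h j u : adj G j u -> 4 * h < g + 4 ->
  p j * Sr h <= \sum_(i in desc h j u) p i.
Proof.
elim: h j u => [|h IH] j u aju Hh; first by rewrite muln0.
have [nB S] := @kids_sum j (fun u' => adj G j u' && (u' != u)) (fun _ => h)
  (fun u' => fun H => proj1 (andP H)) ltac:(move=> *; lia) ltac:(move=> *; lia)
  ltac:(move=> u' j' _ aj'; apply: IH aj' _; lia).
rewrite /= big_setU1 //=.
rewrite mulnDr muln1 leq_add2l.
apply: leq_trans S.
rewrite sum_nat_const.
have Hc : d - 1 <= #|[pred u' | adj G j u' && (u' != u)]|.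
  have := Hdeg j; rewrite /left_deg (cardD1 u) inE aju /= add1n.
  have -> : #|[predD1 [set u0 | adj G j u0] & u]| = #|[pred u' | adj G j u' && (u' != u)]|.
    by apply: eq_card => z; rewrite !inE andbC.
  lia.
rewrite (mulnC (d - 1)) -!mulnA mulnCA.
have -> : x * (p j * ((d - 1) * Sr h)) = (d - 1) * (x * (p j * Sr h)).
  by nia.
exact: leq_mul.
Qed.

Lemma root_sum i0 (hu : 'I_m -> nat) :
  (forall u, adj G i0 u -> 2 * hu u < g) ->
  (forall u1 u2, adj G i0 u1 -> adj G i0 u2 -> 2 * hu u1 + 2 * hu u2 < g + (u1 == u2)) ->
  (forall u, adj G i0 u -> 4 * hu u < g + 4) ->
  p i0 + \sum_(u | adj G i0 u) x * p i0 * Sr (hu u) <= \sum_i p i.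
Proof.
move=> H1 H2 H3.
have [nB S] := @kids_sum i0 (adj G i0) hu (fun u H => H) H1 H2
  ltac:(move=> u' j' au aj'; apply: desc_sum aj' _; exact: H3).
apply: leq_trans (_ : \sum_(i in i0 |: \bigcup_(c : 'I_m * 'I_n)
      (if adj G i0 c.1 && adj G c.2 c.1 && (c.2 != i0) then desc (hu c.1) c.2 c.1 else set0)) p i <= _).
  by rewrite big_setU1 //= leq_add2l.
by rewrite [X in _ <= X](bigID (mem (i0 |: \bigcup_(c : 'I_m * 'I_n)
      (if adj G i0 c.1 && adj G c.2 c.1 && (c.2 != i0) then desc (hu c.1) c.2 c.1 else set0)))) /= leq_addr.
Qed.

End Graph.
Lemma F2_nat_eq0 (b : bool) : ((b%:R : 'F_2)%R != 0%R) = b.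
Proof. by case: b. Qed.

Lemma local_ineq (n m k D : nat) (G : tanner n m k) (p : 'I_n -> nat) :
  (forall u c, c \in code G u -> c != 0%R -> D <= hweight c) -> pseudocodeword G p ->
  forall i u, adj G i u -> (D - 1) * p i <= \sum_(j | adj G j u && (j != i)) p j.
Proof.
move=> HD [ell [perm [w [Hl Hp]]]] i u aiu.
have [jj0 ej0] := nb_onto aiu.
pose W jj b := w (nb G u jj) ((perm (nb G u jj) u)^-1%g b).
have pW jj : p (nb G u jj) = #|[set b | W jj b]|.
  rewrite Hp /W -(card_preimset _ (@perm_inj _ (perm (nb G u jj) u))).
  by apply: eq_card => a; rewrite !inE permK.
have -> : \sum_(j | adj G j u && (j != i)) p j = \sum_(jj | jj != jj0) p (nb G u jj).
  have E : \sum_(jj | jj != jj0) p (nb G u jj) =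
      \sum_(j in [set nb G u jj | jj in [pred jj | jj != jj0]]) p j.
    by rewrite big_imset //; move=> a b _ _; exact: nb_inj.
  rewrite E; apply: eq_bigl => j; apply/andP/imsetP.
    case=> /nb_onto [jj <-] ne; exists jj => //; rewrite inE; apply: contraNneq ne => ->.
    by rewrite ej0.
  case=> jj; rewrite inE => ne ->; split; first exact: nb_adj.
  by rewrite -ej0 (inj_eq (@nb_inj _ _ _ G u)).
under eq_bigr do rewrite pW.
have -> : \sum_(jj | jj != jj0) #|[set b | W jj b]| =
          \sum_b #|[set jj | (jj != jj0) && W jj b]|.
  under eq_bigr do rewrite -sum1_card.
  under eq_bigr do rewrite big_mkcond.
  rewrite exchange_big /=; apply: eq_bigr => b _; rewrite -sum1_card.
  rewrite big_mkcond [RHS]big_mkcond; apply: eq_bigr => jj _.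
  by rewrite !inE; case: (jj != jj0).
rewrite -ej0 pW -sum1_card big_distrr /= [X in _ <= X](bigID (mem [set b | W jj0 b])) /=.
apply: leq_trans (leq_addr _ _); rewrite muln1.
apply: leq_sum => b; rewrite inE => Wb.
have Hc := Hl u b.
have nz : to_F2 (fun jj => W jj b) != 0%R.
  apply/eqP => /matrixP /(_ ord0 jj0); rewrite !mxE /W -/(W jj0 b) Wb.
  by move/eqP; rewrite oner_eq0.
have := HD u _ Hc nz; rewrite /hweight.
have -> : #|[set j | to_F2 (fun jj => W jj b) ord0 j != 0%R]| = #|[set jj | W jj b]|.
  by apply: eq_card => jj; rewrite !inE mxE F2_nat_eq0.
rewrite (cardsD1 jj0) inE Wb add1n.
have -> : #|[set jj | W jj b] :\ jj0| = #|[set jj | (jj != jj0) && W jj b]|.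
  by apply: eq_card => jj; rewrite !inE.
by rewrite leq_subLR add1n.
Qed.
Lemma weights n (p : 'I_n -> nat) B P : (forall i, p i <= P) -> (exists i, 0 < p i) ->
  B * P <= Defs.total p -> B <= w_BSC p /\ (B%:R <= w_AWGN p)%R.
Proof.
move=> HP [i0 pi0] HB.
have P0 : 0 < P by apply: leq_trans pi0 (HP i0).
split.
  set e := bsc_e p.
  have Hn : Defs.total p <= top_sum p n.
    rewrite /top_sum; apply: leq_trans (@leq_bigmax_cond _ (fun S : {set 'I_n} => #|S| == n) (fun S => \sum_(i in S) p i) [set: 'I_n] _); last first.
      by rewrite cardsT card_ord.
    by rewrite /Defs.total; apply: eq_leq; apply: eq_bigl => i; rewrite inE.
  have hs : has (fun e => Defs.total p <= 2 * top_sum p e) (iota 0 n.+1).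
    apply/hasP; exists n; first by rewrite mem_iota add0n ltnSn.
    by apply: leq_trans Hn _; rewrite mul2n -addnn leq_addr.
  have He : Defs.total p <= 2 * top_sum p e.
    have := nth_find 0 hs; rewrite -/(bsc_e p) -/e nth_iota //.
    by rewrite -(size_iota 0 n.+1) -has_find.
  have Ht : top_sum p e <= e * P.
    apply/bigmax_leqP => S /eqP cS; rewrite -cS -sum_nat_const.
    by apply: leq_sum => i _.
  rewrite /w_BSC -/e; case: eqP => Heq.
    rewrite -Heq in HB; move: HB Ht; rewrite -/(top_sum p e).
    move=> HB Ht; have : B * P <= (2 * e) * P by lia.
    by rewrite leq_pmul2r.
  have : B * P < (2 * e) * P by lia.
  rewrite ltn_pmul2r // => H; lia.
have S2 : \sum_i p i ^ 2 <= Defs.total p * P.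
  rewrite /Defs.total big_distrl /=; apply: leq_sum => i _.
  by rewrite expnS expn1 leq_mul2l HP orbT.
have S0 : 0 < \sum_i p i ^ 2.
  by rewrite (bigD1 i0) //= ltn_addr // expn_gt0 pi0.
have key : B * \sum_i p i ^ 2 <= Defs.total p ^ 2.
  apply: leq_trans (leq_mul (leqnn B) S2) _.
  rewrite mulnCA expnS expn1; apply: leq_mul (leqnn _) _.
  by [].  
rewrite /w_AWGN.
have -> : (\sum_(i < n) ((p i)%:R ^+ 2) = (\sum_i p i ^ 2)%:R :> rat)%R.
  by rewrite natr_sum; apply: eq_bigr => i _; rewrite natrX.
rewrite ler_pdivlMr ?ltr0n // -natrX -natrM ler_nat.
exact: key.
Qed.
Lemma Sr_closed d x h : Sr d x h = \sum_(l < h) ((d - 1) * x) ^ l.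
Proof.
elim: h => [|h IH] /=; first by rewrite big_ord0.
by rewrite big_ord_recl expn0 IH big_distrr /=; congr (_ + _); apply: eq_bigr => i _; rewrite expnS.
Qed.

Lemma bterm_S d x i : bterm d x i.+1 = d * (d - 1) ^ i * x ^ i.+1.
Proof. by rewrite /bterm /= ?subn1 ?subn0 ?subSS. Qed.

Lemma odd_bound d x t : \sum_(i < t.+1) bterm d x i = 1 + d * x * Sr d x t.
Proof.
rewrite big_ord_recl /= Sr_closed big_distrr; congr (_ + _).
apply: eq_bigr => i _; rewrite bterm_S expnMn expnS /=; nia.
Qed.

Lemma even_bound d x t : 0 < d ->
  \sum_(i < t.+1) bterm d x i + (d - 1) ^ t * x ^ t.+1 =
  1 + x * Sr d x t.+1 + (d - 1) * x * Sr d x t.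
Proof.
move=> d0; rewrite !Sr_closed (big_ord_recr t (fun l => ((d - 1) * x) ^ l)) (big_ord_recl t) /=.
have HA : \sum_(i < t) bterm d x (bump 0 i) =
    x * \sum_(i < t) ((d - 1) * x) ^ i + (d - 1) * x * \sum_(l < t) ((d - 1) * x) ^ l.
  rewrite -mulnDl big_distrr /=; apply: eq_bigr => i _.
  rewrite /bump /= add1n bterm_S expnMn expnS.
  have -> : x + (d - 1) * x = d * x by rewrite -{1}(mul1n x) -mulnDl; congr (_ * _); lia.
  nia.
have Ht : (d - 1) ^ t * x ^ t.+1 = x * ((d - 1) * x) ^ t by rewrite expnMn expnS; nia.
rewrite HA Ht /bterm /=.
rewrite mulnDr; lia.
Qed.

Theorem theorem2 (n m k k' D d g : nat) (G : tanner n m k) :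
  right_regular G k ->
  (forall u, is_code_params (code G u) k' D) ->
  min_left_degree G d -> 0 < d ->
  girth G g ->
  forall p : 'I_n -> nat, pseudocodeword G p -> (exists i, 0 < p i) ->
    pcw_bound d (D - 1) g <= w_BSC p /\
    ((pcw_bound d (D - 1) g)%:R <= w_AWGN p)%R.
Proof.
move=> _ Hcode [Hdeg _] d0 [[s [_ g3 _ _]] Hg] p Hpc Hnz.
have Hloc := local_ineq (fun u c Hc nz => (proj1 (proj2 (Hcode u))) c Hc nz) Hpc.
have n0 : 0 < #|'I_n| by case: Hnz => i _; apply/card_gt0P; exists i.
have [i0 Hi0] := @bigop.eq_bigmax _ p n0.
set P := \max_i p i in Hi0.
have HP : forall i, p i <= P by move=> i; apply: bigop.leq_bigmax.
apply: (weights HP Hnz).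
have RS := @root_sum _ _ _ G g Hg p (D - 1) d Hloc Hdeg i0.
have Hd0 : d <= #|[pred u | adj G i0 u]|.
  by have := Hdeg i0; rewrite /left_deg; congr (_ <= _); apply: eq_card => u; rewrite inE.
rewrite /pcw_bound /Defs.total; case: ifP => Hodd.
  have Hm : (g %/ 2) %% 2 = 1 by rewrite modn2 Hodd.
  set t := (g - 2) %/ 4.
  have := RS (fun _ => t) ltac:(move=> *; lia) ltac:(move=> *; lia) ltac:(move=> *; lia).
  rewrite addn1 odd_bound sum_nat_const => H; apply: leq_trans H.
  rewrite Hi0; have Hc : d <= #|adj G i0| by [].
  move: (Sr d (D - 1) t) (p i0) (D - 1) #|adj G i0| Hc => S q x c Hc.
  have : d * (x * q * S) <= c * (x * q * S) by apply: leq_mul.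
  nia.
have Hm : (g %/ 2) %% 2 = 0 by rewrite modn2 Hodd.
set t := (g - 4) %/ 4.
have Ht : g %/ 4 = t.+1 by rewrite /t; lia.
have [u0 au0] : exists u0, adj G i0 u0.
  have : 0 < #|[pred u | adj G i0 u]| by lia.
  by case/card_gt0P => u; rewrite inE => ?; exists u.
have := RS (fun u => if u == u0 then t.+1 else t).
have H1 : forall u, adj G i0 u -> 2 * (if u == u0 then t.+1 else t) < g.
  by move=> u _; case: (u == u0); rewrite /t; lia.
have H2 : forall u1 u2, adj G i0 u1 -> adj G i0 u2 ->
  2 * (if u1 == u0 then t.+1 else t) + 2 * (if u2 == u0 then t.+1 else t) < g + (u1 == u2).
  move=> u1 u2 _ _; case: (u1 =P u0) => [->|n1]; case: (u2 =P u0) => [->|n2].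
  - by rewrite eqxx /t; lia.
  - by apply: leq_trans (leq_addr _ _); rewrite /t; lia.
  - by apply: leq_trans (leq_addr _ _); rewrite /t; lia.
  - by apply: leq_trans (leq_addr _ _); rewrite /t; lia.
have H3 : forall u, adj G i0 u -> 4 * (if u == u0 then t.+1 else t) < g + 4.
  by move=> u _; case: (u == u0); rewrite /t; lia.
move/(_ H1 H2 H3); rewrite (bigD1 u0) //= eqxx.
rewrite (eq_bigr (fun _ => (D - 1) * p i0 * Sr d (D - 1) t)); last first.
  by move=> u /andP[_ /negbTE ->].
rewrite sum_nat_const => H; apply: leq_trans H.
have Hc : d - 1 <= #|[pred u | adj G i0 u && (u != u0)]|.
  move: Hd0; rewrite (cardD1 u0) inE au0 /= add1n.
  have -> : #|[predD1 [pred u | adj G i0 u] & u0]| = #|[pred u | adj G i0 u && (u != u0)]|.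
    by apply: eq_card => z; rewrite !inE andbC.
  lia.
rewrite addn1 Ht even_bound // Hi0.
move: (Sr d (D - 1) t) (Sr d (D - 1) t.+1) (p i0) (D - 1) #|_| Hc => S S' q x c Hc.
have : (d - 1) * (x * q * S) <= c * (x * q * S) by apply: leq_mul.
nia.
Qed.
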